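(* Let $(D,\mu)$ be an associative algebra over a field $k$, $\alpha:D\to D$ an algebra endomorphism, and $T:D\otimes D\to D\otimes D$ a pseudotwistor with companions $\tilde T_1,\tilde T_2$, i.e. linear maps $\tilde T_1,\tilde T_2:D^{\otimes 3}\to D^{\otimes 3}$ with $T\circ(\mathrm{id}_D\otimes\mu)=(\mathrm{id}_D\otimes\mu)\circ\tilde T_1\circ(T\otimes\mathrm{id}_D)$, $T\circ(\mu\otimes\mathrm{id}_D)=(\mu\otimes\mathrm{id}_D)\circ\tilde T_2\circ(\mathrm{id}_D\otimes T)$ and $\tilde T_1\circ(T\otimes\mathrm{id}_D)\circ(\mathrm{id}_D\otimes T)=\tilde T_2\circ(\mathrm{id}_D\otimes T)\circ(T\otimes\mathrm{id}_D)$. Assume moreover $(\alpha\otimes\alpha)\circ T=T\circ(\alpha\otimes\alpha)$. Consider the associative algebra $D^T=(D,\mu\circ T)$ and the Hom-associative algebra $D_\alpha=(D,\alpha\circ\mu,\alpha)$. Then $T$ is a Hom-pseudotwistor for $D_\alpha$ with companions $\tilde T_1,\tilde T_2$, the map $\alpha$ is an algebra endomorphism of $D^T$, and the Hom-associative algebras $(D_\alpha)^T=(D,(\alpha\circ\mu)\circ T,\alpha)$ and $(D^T)_\alpha=(D,\alpha\circ(\mu\circ T),\alpha)$ coincide. In particular, if $T$ is a twistor for $D$, then $T$ is a Hom-twistor for $D_\alpha$.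
   Context: Algebras are over $k$ and not assumed unital. A Hom-associative algebra is $(A,\mu,\alpha)$ with $\alpha(aa')=\alpha(a)\alpha(a')$ and $\alpha(a)(a'a'')=(aa')\alpha(a'')$. For a Hom-associative algebra $(D,\mu,\alpha)$, a linear $T:D\otimes D\to D\otimes D$ is a Hom-pseudotwistor with companions $\tilde T_1,\tilde T_2:D^{\otimes3}\to D^{\otimes 3}$ if $(\alpha\otimes\alpha)\circ T=T\circ(\alpha\otimes\alpha)$, $T\circ(\alpha\otimes\mu)=(\alpha\otimes\mu)\circ\tilde T_1\circ(T\otimes\mathrm{id})$, $T\circ(\mu\otimes\alpha)=(\mu\otimes\alpha)\circ\tilde T_2\circ(\mathrm{id}\otimes T)$, $\tilde T_1\circ(T\otimes\mathrm{id})\circ(\mathrm{id}\otimes T)=\tilde T_2\circ(\mathrm{id}\otimes T)\circ(T\otimes\mathrm{id})$; then $(D,\mu\circ T,\alpha)$ is Hom-associative. Write $T(d\otimes d')=d^T\otimes d'_T$, $T_{12}=T\otimes\mathrm{id}$, $T_{23}=\mathrm{id}\otimes T$, $T_{13}(d\otimes d'\otimes d'')=d^T\otimes d'\otimes d''_T$. For an associative algebra $(D,\mu)$, a twistor is a linear $T$ with $T\circ(\mathrm{id}\otimes\mu)=(\mathrm{id}\otimes\mu)\circ T_{13}\circ T_{12}$, $T\circ(\mu\otimes\mathrm{id})=(\mu\otimes\mathrm{id})\circ T_{13}\circ T_{23}$, $T_{12}\circ T_{23}=T_{23}\circ T_{12}$. For a Hom-associative algebra $(D,\mu,\alpha)$,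 a Hom-twistor is a linear $T$ with $(\alpha\otimes\alpha)\circ T=T\circ(\alpha\otimes\alpha)$, $T\circ(\alpha\otimes\mu)=(\alpha\otimes\mu)\circ T_{13}\circ T_{12}$, $T\circ(\mu\otimes\alpha)=(\mu\otimes\alpha)\circ T_{13}\circ T_{23}$, $T_{12}\circ T_{23}=T_{23}\circ T_{12}$. It is known that $D^T$ is associative for a pseudotwistor $T$, and $D_\alpha$ is Hom-associative for an algebra endomorphism $\alpha$. *)

(* Defs.v *)
(* Tensor products are not in the library: D ⊗ D and
   D ⊗ D ⊗ D are given by their universal properties. *)
From HB Require Import structures.
From mathcomp Require Import all_boot all_algebra.
From Stdlib Require Import ClassicalEpsilon.
Set Implicit Arguments. Unset Strict Implicit. Unset Printing Implicit Defensive.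
Import GRing.Theory.
Local Open Scope ring_scope.

Definition islinear {k : fieldType} {U V : lmodType k} (f : U -> V) : Prop :=
  forall (r : k) (x y : U), f (r *: x + y) = r *: f x + f y.

Definition isbilinear {k : fieldType} {U V W : lmodType k} (f : U -> V -> W) : Prop :=
  (forall b, islinear (fun a => f a b)) /\ (forall a, islinear (f a)).

Definition istrilinear {k : fieldType} {U V X W : lmodType k}
  (f : U -> V -> X -> W) : Prop :=
  (forall b c, islinear (fun a => f a b c)) /\ (forall a c, islinear (fun b => f a b c))
  /\ (forall a b, islinear (f a b)).

Definition is_tensor2 {k : fieldType} {D D2 : lmodType k} (t2 : D -> D -> D2) : Prop :=
  isbilinear t2 /\
  (forall (W : lmodType k) (f : D -> D -> W), isbilinear f ->
     exists g : D2 -> W, islinear g /\ forall a b, g (t2 a b) = f a b) /\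
  (forall (W : lmodType k) (g h : D2 -> W), islinear g -> islinear h ->
     (forall a b, g (t2 a b) = h (t2 a b)) -> g = h).

Definition is_tensor3 {k : fieldType} {D D3 : lmodType k} (t3 : D -> D -> D -> D3) : Prop :=
  istrilinear t3 /\
  (forall (W : lmodType k) (f : D -> D -> D -> W), istrilinear f ->
     exists g : D3 -> W, islinear g /\ forall a b c, g (t3 a b c) = f a b c) /\
  (forall (W : lmodType k) (g h : D3 -> W), islinear g -> islinear h ->
     (forall a b c, g (t3 a b c) = h (t3 a b c)) -> g = h).

Definition ext2 {k : fieldType} {D D2 W : lmodType k} (t2 : D -> D -> D2)
  (f : D -> D -> W) : D2 -> W :=
  epsilon (inhabits (fun _ => 0)) (fun g => islinear g /\ forall a b, g (t2 a b) = f a b).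

Definition ext3 {k : fieldType} {D D3 W : lmodType k} (t3 : D -> D -> D -> D3)
  (f : D -> D -> D -> W) : D3 -> W :=
  epsilon (inhabits (fun _ => 0))
    (fun g => islinear g /\ forall a b c, g (t3 a b c) = f a b c).

Definition tmap2 {k : fieldType} {D D2 : lmodType k} (t2 : D -> D -> D2)
  (f g : D -> D) : D2 -> D2 := ext2 t2 (fun a b => t2 (f a) (g b)).

Definition tmap3l {k : fieldType} {D D2 D3 : lmodType k} (t2 : D -> D -> D2)
  (t3 : D -> D -> D -> D3) (f : D -> D) (m : D -> D -> D) : D3 -> D2 :=
  ext3 t3 (fun a b c => t2 (f a) (m b c)).

Definition tmap3r {k : fieldType} {D D2 D3 : lmodType k} (t2 : D -> D -> D2)
  (t3 : D -> D -> D -> D3) (m : D -> D -> D) (f : D -> D) : D3 -> D2 :=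
  ext3 t3 (fun a b c => t2 (m a b) (f c)).

Definition T12 {k : fieldType} {D D2 D3 : lmodType k} (t2 : D -> D -> D2)
  (t3 : D -> D -> D -> D3) (T : D2 -> D2) : D3 -> D3 :=
  ext3 t3 (fun a b c => ext2 t2 (fun x y => t3 x y c) (T (t2 a b))).

Definition T23 {k : fieldType} {D D2 D3 : lmodType k} (t2 : D -> D -> D2)
  (t3 : D -> D -> D -> D3) (T : D2 -> D2) : D3 -> D3 :=
  ext3 t3 (fun a b c => ext2 t2 (fun x y => t3 a x y) (T (t2 b c))).

Definition T13 {k : fieldType} {D D2 D3 : lmodType k} (t2 : D -> D -> D2)
  (t3 : D -> D -> D -> D3) (T : D2 -> D2) : D3 -> D3 :=
  ext3 t3 (fun a b c => ext2 t2 (fun x y => t3 x b y) (T (t2 a c))).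

Definition twist_mul {k : fieldType} {D D2 : lmodType k} (t2 : D -> D -> D2)
  (m : D -> D -> D) (T : D2 -> D2) : D -> D -> D :=
  fun a b => ext2 t2 m (T (t2 a b)).

Definition Pseudotwistor {k : fieldType} {D D2 D3 : lmodType k} (t2 : D -> D -> D2)
  (t3 : D -> D -> D -> D3) (m : D -> D -> D) (T : D2 -> D2) (T1 T2 : D3 -> D3) : Prop :=
  islinear T /\ islinear T1 /\ islinear T2 /\
   T \o tmap3l t2 t3 id m = tmap3l t2 t3 id m \o T1 \o T12 t2 t3 T /\
   T \o tmap3r t2 t3 m id = tmap3r t2 t3 m id \o T2 \o T23 t2 t3 T /\
   T1 \o T12 t2 t3 T \o T23 t2 t3 T = T2 \o T23 t2 t3 T \o T12 t2 t3 T.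

Definition HomPseudotwistor {k : fieldType} {D D2 D3 : lmodType k} (t2 : D -> D -> D2)
  (t3 : D -> D -> D -> D3) (m : D -> D -> D) (al : D -> D) (T : D2 -> D2)
  (T1 T2 : D3 -> D3) : Prop :=
  islinear T /\ islinear T1 /\ islinear T2 /\
   tmap2 t2 al al \o T = T \o tmap2 t2 al al /\
   T \o tmap3l t2 t3 al m = tmap3l t2 t3 al m \o T1 \o T12 t2 t3 T /\
   T \o tmap3r t2 t3 m al = tmap3r t2 t3 m al \o T2 \o T23 t2 t3 T /\
   T1 \o T12 t2 t3 T \o T23 t2 t3 T = T2 \o T23 t2 t3 T \o T12 t2 t3 T.

Definition Twistor {k : fieldType} {D D2 D3 : lmodType k} (t2 : D -> D -> D2)
  (t3 : D -> D -> D -> D3) (m : D -> D -> D) (T : D2 -> D2) : Prop :=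
  islinear T /\
   T \o tmap3l t2 t3 id m = tmap3l t2 t3 id m \o T13 t2 t3 T \o T12 t2 t3 T /\
   T \o tmap3r t2 t3 m id = tmap3r t2 t3 m id \o T13 t2 t3 T \o T23 t2 t3 T /\
   T12 t2 t3 T \o T23 t2 t3 T = T23 t2 t3 T \o T12 t2 t3 T.

Definition HomTwistor {k : fieldType} {D D2 D3 : lmodType k} (t2 : D -> D -> D2)
  (t3 : D -> D -> D -> D3) (m : D -> D -> D) (al : D -> D) (T : D2 -> D2) : Prop :=
  islinear T /\
   tmap2 t2 al al \o T = T \o tmap2 t2 al al /\
   T \o tmap3l t2 t3 al m = tmap3l t2 t3 al m \o T13 t2 t3 T \o T12 t2 t3 T /\
   T \o tmap3r t2 t3 m al = tmap3r t2 t3 m al \o T13 t2 t3 T \o T23 t2 t3 T /\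
   T12 t2 t3 T \o T23 t2 t3 T = T23 t2 t3 T \o T12 t2 t3 T.

Definition AlgEndo {k : fieldType} {D : lmodType k} (m : D -> D -> D) (al : D -> D) : Prop :=
  islinear al /\ forall a b, al (m a b) = m (al a) (al b).

(* Main.v *)
Require Import Defs.
From mathcomp Require Import all_boot all_algebra.
From Stdlib Require Import ClassicalEpsilon FunctionalExtensionality.
Import GRing.Theory.
Local Open Scope ring_scope.

Lemma ext2P (k : fieldType) (D D2 W : lmodType k) (t2 : D -> D -> D2) (f : D -> D -> W) :
  is_tensor2 t2 -> isbilinear f ->
  islinear (ext2 t2 f) /\ forall a b, ext2 t2 f (t2 a b) = f a b.
Proof. move=> [_ [Hex _]] Hf; rewrite /ext2; apply epsilon_spec; exact: Hex. Qed.

Lemma ext3P (k : fieldType) (D D3 W : lmodType k) (t3 : D -> D -> D -> D3)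
  (f : D -> D -> D -> W) :
  is_tensor3 t3 -> istrilinear f ->
  islinear (ext3 t3 f) /\ forall a b c, ext3 t3 f (t3 a b c) = f a b c.
Proof. move=> [_ [Hex _]] Hf; rewrite /ext3; apply epsilon_spec; exact: Hex. Qed.

Lemma lin_comp (k : fieldType) (U V W : lmodType k) (f : V -> W) (g : U -> V) :
  islinear f -> islinear g -> islinear (f \o g).
Proof. by move=> Hf Hg r x y /=; rewrite Hg Hf. Qed.

Lemma lin_id (k : fieldType) (U : lmodType k) : islinear (@id U).
Proof. by []. Qed.

Lemma tmap2_bil (k : fieldType) (D D2 : lmodType k) (t2 : D -> D -> D2) (f g : D -> D) :
  isbilinear t2 -> islinear f -> islinear g -> isbilinear (fun a b => t2 (f a) (g b)).
Proof.
move=> [H1 H2] Hf Hg; split=> [b|a] r x y /=.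
  by rewrite Hf H1.
by rewrite Hg H2.
Qed.

Lemma tri_l (k : fieldType) (D D2 : lmodType k) (t2 : D -> D -> D2) (f : D -> D)
  (m : D -> D -> D) :
  isbilinear t2 -> islinear f -> isbilinear m -> istrilinear (fun a b c => t2 (f a) (m b c)).
Proof.
move=> [H1 H2] Hf [M1 M2]; split; [|split] => ? ? r x y /=.
- by rewrite Hf H1.
- by rewrite M1 H2.
- by rewrite M2 H2.
Qed.

Lemma tri_r (k : fieldType) (D D2 : lmodType k) (t2 : D -> D -> D2) (f : D -> D)
  (m : D -> D -> D) :
  isbilinear t2 -> islinear f -> isbilinear m -> istrilinear (fun a b c => t2 (m a b) (f c)).
Proof.
move=> [H1 H2] Hf [M1 M2]; split; [|split] => ? ? r x y /=.
- by rewrite M1 H1.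
- by rewrite M2 H1.
- by rewrite Hf H2.
Qed.

Lemma bil_alm (k : fieldType) (D : lmodType k) (m : D -> D -> D) (al : D -> D) :
  isbilinear m -> islinear al -> isbilinear (fun a b => al (m a b)).
Proof. by move=> [M1 M2] Ha; split=> ? r x y /=; rewrite ?M1 ?M2 Ha. Qed.

Theorem proposition2p4 (k : fieldType) (D D2 D3 : lmodType k)
  (t2 : D -> D -> D2) (t3 : D -> D -> D -> D3)
  (mul : D -> D -> D) (al : D -> D) (T : D2 -> D2) :
  is_tensor2 t2 -> is_tensor3 t3 ->
  isbilinear mul -> (forall a b c, mul a (mul b c) = mul (mul a b) c) ->
  AlgEndo mul al ->
  islinear T ->
  tmap2 t2 al al \o T = T \o tmap2 t2 al al ->
  (forall T1 T2 : D3 -> D3, Pseudotwistor t2 t3 mul T T1 T2 ->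
     [/\ HomPseudotwistor t2 t3 (fun a b => al (mul a b)) al T T1 T2,
         AlgEndo (twist_mul t2 mul T) al &
         twist_mul t2 (fun a b => al (mul a b)) T
           = (fun a b => al (twist_mul t2 mul T a b))]) /\
  (Twistor t2 t3 mul T -> HomTwistor t2 t3 (fun a b => al (mul a b)) al T).
Proof.
move=> H2 H3 Hm Hass [Hal Halm] HT Hcomm.
have Ht2 : isbilinear t2 by case: H2.
have [_ [_ U2]] := H2. have [_ [_ U3]] := H3.
have [Lta Eta] := @ext2P _ _ _ _ _ _ H2 (@tmap2_bil _ _ _ _ _ _ Ht2 Hal Hal).
have [Ll El] := @ext3P _ _ _ _ _ _ H3 (@tri_l _ _ _ _ _ _ Ht2 (@lin_id _ D) Hm).
have [Lr Er] := @ext3P _ _ _ _ _ _ H3 (@tri_r _ _ _ _ _ _ Ht2 (@lin_id _ D) Hm).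
have [Lla Ela] := @ext3P _ _ _ _ _ _ H3 (@tri_l _ _ _ _ _ _ Ht2 Hal (@bil_alm _ _ _ _ Hm Hal)).
have [Lra Era] := @ext3P _ _ _ _ _ _ H3 (@tri_r _ _ _ _ _ _ Ht2 Hal (@bil_alm _ _ _ _ Hm Hal)).
have [Lm Em] := @ext2P _ _ _ _ _ _ H2 Hm.
have [Lam Eam] := @ext2P _ _ _ _ _ _ H2 (@bil_alm _ _ _ _ Hm Hal).
have FL : tmap3l t2 t3 al (fun a b => al (mul a b)) = tmap2 t2 al al \o tmap3l t2 t3 id mul.
  apply: U3 => //; first by apply: lin_comp.
  by move=> a b c /=; rewrite /tmap3l Ela El /tmap2 Eta.
have FR : tmap3r t2 t3 (fun a b => al (mul a b)) al = tmap2 t2 al al \o tmap3r t2 t3 mul id.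
  apply: U3 => //; first by apply: lin_comp.
  by move=> a b c /=; rewrite /tmap3r Era Er /tmap2 Eta.
have FM : ext2 t2 mul \o tmap2 t2 al al = al \o ext2 t2 mul.
  apply: U2; try by apply: lin_comp.
  by move=> a b /=; rewrite /tmap2 Eta !Em Halm.
have FAM : ext2 t2 (fun a b => al (mul a b)) = al \o ext2 t2 mul.
  apply: U2 => //; first by apply: lin_comp.
  by move=> a b /=; rewrite Eam Em.
split.
  move=> T1 T2 [LT [L1 [L2 [P1 [P2 P3]]]]].
  split.
  - split=> //; split=> //; split=> //; split=> //; split; [|split] => //.
    + rewrite FL; apply: functional_extensionality => x /=.
      have := congr1 (fun f => f x) P1 => /= <-.
      by have := congr1 (fun f => f (tmap3l t2 t3 _ _ x)) Hcomm => /= ->.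
    + rewrite FR; apply: functional_extensionality => x /=.
      have := congr1 (fun f => f x) P2 => /= <-.
      by have := congr1 (fun f => f (tmap3r t2 t3 _ _ x)) Hcomm => /= ->.
  - split=> // a b; rewrite /twist_mul.
    have -> : t2 (al a) (al b) = tmap2 t2 al al (t2 a b) by rewrite /tmap2 Eta.
    have := congr1 (fun f => f (t2 a b)) Hcomm => /= <-.
    by have := congr1 (fun f => f (T (t2 a b))) FM => /= ->.
  - apply: functional_extensionality => a; apply: functional_extensionality => b.
    by rewrite /twist_mul FAM.
move=> [LT [P1 [P2 P3]]].
split=> //; split=> //; split; [|split] => //.
- rewrite FL; apply: functional_extensionality => x /=.
      have := congr1 (fun f => f x) P1 => /= <-.
      by have := congr1 (fun f => f (tmap3l t2 t3 _ _ x)) Hcomm => /= ->.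
- rewrite FR; apply: functional_extensionality => x /=.
      have := congr1 (fun f => f x) P2 => /= <-.
      by have := congr1 (fun f => f (tmap3r t2 t3 _ _ x)) Hcomm => /= ->.
Qed.
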